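(* Let $d\ge 2$ and for $\mathbf{p}\in(0,\infty)^d$ let $$G(\mathbf{p})=\min_{\mathbf{w}\in W_d}\frac{\prod_{i=1}^d p_i}{\big(\sum_{i=1}^d w_i^2p_i^2\big)^{d/2}}.$$ Then $\sup_{\mathbf{p}\in(0,\infty)^d}G(\mathbf{p})$ is attained, and there exists $\mathbf{p}^\star\in(0,\infty)^d$ such that every point of the one-dimensional vector half-space $P^\star=\{\kappa\mathbf{p}^\star:\kappa>0\}$ is a maximizer of $G$.
   Context: $W_d$ is the set of $d$ vectors $\mathbf{w}_k=(w_{k,1},\dots,w_{k,d})$, $k\in\{1,\dots,d\}$, given by $w_{k,i}=0$ for $i<k$, $w_{k,k}=k$, and $w_{k,i}=i-1$ for $k<i\le d$. *)

(* Defs.v *)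
From HB Require Import structures.
From mathcomp Require Import all_boot all_order all_algebra.
From mathcomp Require Import all_classical all_reals all_analysis.
Set Implicit Arguments. Unset Strict Implicit. Unset Printing Implicit Defensive.
Import Order.TTheory GRing.Theory Num.Theory.
Local Open Scope ring_scope.

(* The vectors w_k of W_d, 1-based in the paper; here k, i : 'I_d are 0-based,
   so paper index k = k+1, i = i+1:
   w_{k,i} = 0 if i < k, = k (paper) = k+1 (0-based) if i = k,
   = i - 1 (paper) = i (0-based) if i > k. *)
Definition wW (d : nat) (k i : 'I_d) : nat :=
  if (i < k)%N then 0%N else if i == k then k.+1 else (i : nat).

Definition Gratio (R : realType) (d : nat) (p : 'I_d -> R) (k : 'I_d) : R :=
  (\prod_(i < d) p i) /
  powR (\sum_(i < d) ((wW k i)%:R ^+ 2 * p i ^+ 2)) (d%:R / 2).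

(* The minimum over the finite
   (nonempty for d >= 1) index set is taken in the extended reals, whose
   top element +oo is the neutral element of the iterated min. *)
Definition G (R : realType) (d : nat) (p : 'I_d -> R) : \bar R :=
  \big[Order.min/+oo%E]_(k < d) (Gratio p k)%:E.

Definition posvec (R : realType) (d : nat) (p : 'I_d -> R) : Prop :=
  forall i, 0 < p i.

(* Main.v *)
Require Import Defs.
From HB Require Import structures.
From mathcomp Require Import all_boot all_order all_algebra.
From mathcomp Require Import all_classical all_reals all_analysis.
Import Order.TTheory GRing.Theory Num.Theory.
Import numFieldNormedType.Exports.
Local Open Scope ring_scope.
Local Open Scope classical_set_scope.
Set Implicit Arguments. Unset Strict Implicit.

Lemma bigmin_seed (R : realType) (I : Type) (s : seq I) (F : I -> R) (x : R) :
  (\big[Order.min/x]_(k <- s) F k)%:E =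
  Order.min x%:E (\big[Order.min/+oo%E]_(k <- s) (F k)%:E).
Proof.
elim: s => [|i s IH]; first by rewrite !big_nil minEle leey.
rewrite !big_cons EFin_min IH.
by rewrite minCA.
Qed.

Lemma G_fin (R : realType) n (p : 'I_n.+1 -> R) :
  G p = (\big[Order.min/Gratio p ord0]_(k < n.+1) Gratio p k)%:E.
Proof.
rewrite /G bigmin_seed big_ord_recl minA minxx.
by [].
Qed.

Lemma wW_pos d (k i : 'I_d) : (i == k)%N || (k < i)%N -> (1 <= wW k i)%N.
Proof.
rewrite /wW; case/orP => [/eqP ->|ki]; first by rewrite ltnn eqxx.
case: ifP => [ik|_]; first by move: (ltn_trans ki ik); rewrite ltnn.
case: eqP => [ik|_]; first by move: ki; rewrite ik ltnn.
by apply: leq_ltn_trans (leq0n k) ki.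
Qed.

Lemma Gratio_hom (R : realType) d (p : 'I_d -> R) k (c : R) :
  0 < c -> posvec p -> Gratio (fun i => c * p i) k = Gratio p k.
Proof.
move=> c0 pp; rewrite /Gratio.
have -> : \prod_(i < d) (c * p i) = c ^+ d * \prod_(i < d) p i.
  by rewrite big_split /= prodr_const card_ord.
have -> : \sum_(i < d) ((wW k i)%:R ^+ 2 * (c * p i) ^+ 2) =
    c ^+ 2 * \sum_(i < d) ((wW k i)%:R ^+ 2 * p i ^+ 2).
  by rewrite mulr_sumr; apply: eq_bigr => i _; rewrite exprMn mulrCA.
rewrite powRM; last first.
- by apply: sumr_ge0 => i _; rewrite mulr_ge0 // exprn_ge0 // ltW.
- by rewrite exprn_ge0 // ltW.
rewrite -(powR_mulrn 2 (ltW c0)) -powRrM.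
have -> : (2%:R * (d%:R / 2) : R) = d%:R by rewrite mulrC -mulrA mulVf ?mulr1 // pnatr_eq0.
rewrite powR_mulrn ?ltW //.
rewrite invfM mulrACA mulfV ?mul1r //.
by rewrite expf_neq0 // gt_eqF.
Qed.
Definition toF (R : realType) d (v : 'rV[R]_d) : 'I_d -> R := fun i => v ord0 i.

Lemma mul_cont (R : realType) : continuous (fun x : R * R => x.1 * x.2).
Proof. by move=> x; apply: cvgM; [exact: cvg_fst|exact: cvg_snd]. Qed.
Lemma add_cont (R : realType) : continuous (fun x : R * R => x.1 + x.2).
Proof. by move=> x; apply: cvgD; [exact: cvg_fst|exact: cvg_snd]. Qed.

Lemma Gratio_cont (R : realType) d (k : 'I_d) (v : 'rV[R]_d) :
  (1 <= wW k k)%N -> posvec (toF v) ->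
  {for v, continuous (fun u => Gratio (toF u) k)}.
Proof.
move=> wkk pv; rewrite /Gratio /toF.
have hc i : (fun u : 'rV[R]_d => (u : 'rV[R]_d) ord0 i) @ v --> v ord0 i.
  exact: coord_continuous.
have Spos : 0 < \sum_(i < d) ((wW k i)%:R ^+ 2 * v ord0 i ^+ 2).
  rewrite (bigD1 k) //= ltr_pwDl //.
    by rewrite mulr_gt0 // exprn_gt0 // ?ltr0n // pv.
  by apply: sumr_ge0 => i _; rewrite mulr_ge0 // sqr_ge0.
have hP : \prod_(i < d) (u : 'rV[R]_d) ord0 i @[u --> (v : 'rV[R]_d)] --> \prod_(i < d) v ord0 i.
  exact: (@cvg_big R _ *%R 1 xpredT (@mul_cont R) _ (nbhs v) (index_enum _) (fun i u => (u : 'rV[R]_d) ord0 i) (fun i => v ord0 i) _ (fun i _ => hc i)).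
have hS : \sum_(i < d) ((wW k i)%:R ^+ 2 * (u : 'rV[R]_d) ord0 i ^+ 2) @[u --> (v : 'rV[R]_d)] -->
    \sum_(i < d) ((wW k i)%:R ^+ 2 * v ord0 i ^+ 2).
  apply: (@cvg_big R _ +%R 0 xpredT (@add_cont R) _ (nbhs v) (index_enum _) (fun i (u : 'rV[R]_d) => (wW k i)%:R ^+ 2 * u ord0 i ^+ 2) (fun i => (wW k i)%:R ^+ 2 * v ord0 i ^+ 2) _) => i _.
  apply: cvgM; first exact: cvg_cst.
  by rewrite expr2; under eq_cvg do rewrite expr2; apply: cvgM; exact: hc.
have hpow : {for (\sum_(i < d) ((wW k i)%:R ^+ 2 * v ord0 i ^+ 2)),
   continuous (fun a : R => a `^ (d%:R / 2))}.
  apply: differentiable_continuous; apply/derivable1_diffP.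
  by apply: derivable_powR; rewrite in_itv /= Spos.
have hD := cvg_comp _ _ hS hpow.
have hV := @cvgV _ _ (nbhs v) (nbhs_filter v) _ _ (negbT (gt_eqF (powR_gt0 (d%:R / 2) Spos))) hD.
have H := cvgM hP hV. move=> A HA. apply: H. exact: HA.
Qed.

Lemma cvg_bigmin_seed (R : realType) (T : topologicalType) (I : Type) (s : seq I)
  (x : T -> R) (f : I -> T -> R) (v : T) :
  {for v, continuous x} -> (forall i, {for v, continuous (f i)}) ->
  {for v, continuous (fun u => \big[Order.min/x u]_(i <- s) f i u)}.
Proof.
move=> hx hf; elim: s => [|i s IH].
  have -> : (fun u => \big[Order.min/x u]_(i <- [::]) f i u) = x.
    by apply: funext => u; rewrite big_nil.
  exact: hx.
have -> : (fun u => \big[Order.min/x u]_(j <- i :: s) f j u) =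
  (fun u => Order.min (f i u) (\big[Order.min/x u]_(j <- s) f j u)).
  by apply: funext => u; rewrite big_cons.
exact: (@continuous_min R T (f i) (fun u => \big[Order.min/x u]_(i <- s) f i u) v (hf i) IH).
Qed.

Lemma G_hom (R : realType) d (p : 'I_d -> R) (c : R) :
  0 < c -> posvec p -> G (fun i => c * p i) = G p.
Proof.
by move=> c0 pp; rewrite /G; apply: eq_bigr => k _; rewrite Gratio_hom.
Qed.

Lemma S_pos (R : realType) d (p : 'I_d -> R) k : posvec p ->
  0 < \sum_(i < d) ((wW k i)%:R ^+ 2 * p i ^+ 2).
Proof.
move=> pv; have wkk : (1 <= wW k k)%N by apply: wW_pos; rewrite eqxx.
rewrite (bigD1 k) //= ltr_pwDl //.
  by rewrite mulr_gt0 // exprn_gt0 // ?ltr0n // pv.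
by apply: sumr_ge0 => i _; rewrite mulr_ge0 // sqr_ge0.
Qed.

Lemma Gratio_pos (R : realType) d (p : 'I_d -> R) k : posvec p -> 0 < Gratio p k.
Proof.
move=> pv; rewrite /Gratio divr_gt0 //; last by rewrite powR_gt0 // S_pos.
by apply: prodr_gt0 => i _; exact: pv.
Qed.

Theorem lemma3 (R : realType) (d : nat) (hd : (2 <= d)%N) :
  (exists p : 'I_d -> R, posvec p /\
     forall q : 'I_d -> R, posvec q -> (G q <= G p)%E) /\
  (exists pstar : 'I_d -> R, posvec pstar /\
     forall kappa : R, 0 < kappa ->
       forall q : 'I_d -> R, posvec q ->
         (G q <= G (fun i : 'I_d => (kappa * pstar i)%R))%E).
Proof.
case: d hd => [|[|n]] // _.
pose gm (p : 'I_n.+2 -> R) := \big[Order.min/Gratio p ord0]_(k < n.+2) Gratio p k.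
have GE p : G p = (gm p)%:E by exact: G_fin.
have gpos p : posvec p -> 0 < gm p.
  move=> pp; apply: (big_ind (fun x => 0 < x)); first exact: Gratio_pos.
    by move=> x y x0 y0; rewrite lt_min x0 y0.
  by move=> k _; exact: Gratio_pos.
pose g1 := gm (fun _ => 1).
have g10 : 0 < g1 by apply: gpos => i; exact: ltr01.
pose δ := Order.min 1 (g1 / 2).
have δ0 : 0 < δ by rewrite lt_min ltr01 divr_gt0.
have δ1 : δ <= 1 by rewrite ge_min lexx.
have δg : δ < g1.
  have h1 : δ <= g1 / 2 by rewrite ge_min lexx orbT.
  apply: le_lt_trans h1 _.
  by rewrite ltr_pdivrMr // ltr_pMr // ltr1n.
pose A := [set v : 'rV[R]_n.+2 | forall i, (`[δ, 1]%classic : set R) (v ord0 i)].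
have cA : compact A := @rV_compact R n.+2 (fun _ => `[δ, 1]%classic) (fun _ => @segment_compact R δ 1).
have inA v : A v -> posvec (toF v).
  move=> vA i; have := vA i; rewrite /= in_itv /= => /andP[+ _].
  by apply: lt_le_trans.
have A0 : A (const_mx 1).
  by move=> i; rewrite /= in_itv /= mxE δ1 lexx.
have cf : {within A, continuous (fun v => gm (toF v))}.
  apply: continuous_in_subspaceT => v; rewrite inE => /inA pv.
  rewrite /gm.
  apply: (@cvg_bigmin_seed R _ _ _ (fun u => Gratio (toF u) ord0) (fun k u => Gratio (toF u) k)) => [|k];
    apply: Gratio_cont => //; apply: wW_pos; by rewrite eqxx.
have [c cA' cmax] := compact_EVT_max (ex_intro _ _ A0) cA cf.
rewrite inE in cA'.
have pc := inA _ cA'.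
have g1c : g1 <= gm (toF c).
  have := cmax (const_mx 1); rewrite inE => /(_ A0).
  by congr (_ <= _); rewrite /g1 /toF; congr gm; apply: funext => i; rewrite mxE.
have Hmain (q : 'I_n.+2 -> R) : posvec q -> (G q <= G (toF c))%E.
  move=> pq.
  case: (@arg_maxP _ R 'I_n.+2 ord0 xpredT q isT) => j _ Hj.
  pose m := q j.
  have m0 : 0 < m := pq j.
  pose q' := fun i => m^-1 * q i.
  have pq' : posvec q' by move=> i; rewrite mulr_gt0 // invr_gt0.
  have q'1 i : q' i <= 1 by rewrite /q' ler_pdivrMl // mulr1; exact: Hj.
  have q'j : q' j = 1 by rewrite /q' mulVf // gt_eqF.
  rewrite -(G_hom (c := m^-1)) // ?invr_gt0 // !GE lee_fin.
  case: (boolP [forall i, δ <= q' i]) => [/forallP hall|].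
    pose v := \row_i q' i.
    have vA : A v by move=> i; rewrite /= in_itv /= mxE hall q'1.
    have := cmax v; rewrite inE => /(_ vA).
    by congr (_ <= _); rewrite /toF; congr gm; apply: funext => i; rewrite mxE.
  rewrite negb_forall => /existsP [i0]; rewrite -ltNge => hi0.
  apply: ltW; apply: (lt_trans _ (lt_le_trans δg g1c)).
  rewrite /gm; apply: (@le_lt_trans _ _ (Gratio q' ord0)); first exact: bigmin_le.
  apply: le_lt_trans _ hi0.
  have hprod : \prod_(i < n.+2) q' i <= q' i0.
    rewrite (bigD1 i0) //=; apply: ler_piMr; first exact: ltW (pq' i0).
    by apply: prodr_ile1 => i _; rewrite (ltW (pq' i)) q'1.
  have hS : 1 <= \sum_(i < n.+2) ((wW ord0 i)%:R ^+ 2 * q' i ^+ 2).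
    rewrite (bigD1 j) //= q'j expr1n mulr1.
    rewrite -[leLHS]addr0; apply: lerD.
      rewrite -natrX ler1n expn_gt0 /= orbF; apply: wW_pos.
      case: (posnP j) => [h|h]; last by apply/orP; right.
      by apply/orP; left; apply/eqP/val_inj.
    by apply: sumr_ge0 => i _; rewrite mulr_ge0 // sqr_ge0.
  have hP : 1 <= (\sum_(i < n.+2) ((wW ord0 i)%:R ^+ 2 * q' i ^+ 2)) `^ (n.+2%:R / 2).
    rewrite -[leLHS](powRr0 (\sum_(i < n.+2) ((wW ord0 i)%:R ^+ 2 * q' i ^+ 2))).
    by apply: (ler_powR hS); rewrite divr_ge0.
  rewrite /Gratio ler_pdivrMr ?(lt_le_trans ltr01 hP) //.
  apply: le_trans hprod _.
  by apply: ler_peMr; [exact: ltW (pq' i0)|].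
split; exists (toF c); split => //.
move=> kappa k0 q pq; rewrite G_hom //; exact: Hmain.
Qed.
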